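(* Let $P(s,h)=\{p_1,\dots,p_m\}$ and $P(h,t)=\{p'_1,\dots,p'_n\}$ be skyline path sets with $p_i=(w_i,c_i)$, $p'_j=(w'_j,c'_j)$, each sorted in weight-increasing order, and let $p_i^j=(w_i+w'_j,c_i+c'_j)$. Fix $i,j$ and let $P_1=\{p_k^l: k<i,\ l<j\}$ and $P_2=\{p_k^l: k>i,\ l>j\}$. Then no path in $P_1\cup P_2$ dominates $p_i^j$.
   Context: A path with value $(w,c)$ dominates a path with value $(w',c')$ if $w\le w'$, $c\le c'$, and at least one inequality is strict. A skyline path set is a set of paths no one of which dominates another (so, in two dimensions, when sorted by increasing weight the costs are non-increasing). Concatenation adds weights and costs. *)

(* Defs.v *)
From HB Require Import structures.
From mathcomp Require Import all_boot all_order all_algebra.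
Set Implicit Arguments. Unset Strict Implicit. Unset Printing Implicit Defensive.
Import Order.TTheory GRing.Theory Num.Theory.
Local Open Scope ring_scope.

Definition dominates (R : realDomainType) (p q : R * R) : Prop :=
  p.1 <= q.1 /\ p.2 <= q.2 /\ (p.1 < q.1 \/ p.2 < q.2).

Definition skyline (R : realDomainType) (m : nat) (p : 'I_m -> R * R) : Prop :=
  forall k l : 'I_m, ~ dominates (p k) (p l).

Definition weight_sorted (R : realDomainType) (m : nat) (p : 'I_m -> R * R) : Prop :=
  forall k l : 'I_m, (k <= l)%N -> (p k).1 <= (p l).1.

Definition concat (R : realDomainType) (p q : R * R) : R * R :=
  (p.1 + q.1, p.2 + q.2).

(* Main.v *)
Require Import Defs.
From mathcomp Require Import all_boot all_order all_algebra.
From mathcomp Require Import lra.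
Import Order.TTheory GRing.Theory Num.Theory.
Local Open Scope ring_scope.

Theorem mainTheorem3 (R : realDomainType) (m n : nat)
  (P : 'I_m -> R * R) (P' : 'I_n -> R * R)
  (hP : skyline P) (hPs : weight_sorted P)
  (hP' : skyline P') (hP's : weight_sorted P')
  (i : 'I_m) (j : 'I_n) :
  forall (k : 'I_m) (l : 'I_n),
    ((k < i)%N /\ (l < j)%N) \/ ((i < k)%N /\ (j < l)%N) ->
    ~ dominates (concat (P k) (P' l)) (concat (P i) (P' j)).
Proof.
move=> k l H.
have A1 := hP k i; have A2 := hP i k; have B1 := hP' l j; have B2 := hP' j l.
have [[W1 W2]|[W1 W2]] : ((P k).1 <= (P i).1 /\ (P' l).1 <= (P' j).1) \/
               ((P i).1 <= (P k).1 /\ (P' j).1 <= (P' l).1).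
  case: H => [[h1 h2]|[h1 h2]]; [left|right]; split;
    (apply: hPs || apply: hP's); exact: ltnW.
all: move: W1 W2 A1 A2 B1 B2; rewrite /dominates /concat /=.
all: case: (P k) => a b; case: (P i) => c d; case: (P' l) => e f; case: (P' j) => g h /=.
all: move=> W1 W2 A1 A2 B1 B2 D; lra.
Qed.
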